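(* Let $\mathcal V\subseteq B(H)$ be an operator system and let $p\in\mathcal V$ be a projection in $B(H)$. Then $(\mathcal V/J_p,\{\widetilde C(p_n)\}_n,p+J_p)$ is an operator system.
   Context: $p_n=I_n\otimes p$; $C(p_n)=\{x\in M_n(\mathcal V): x=x^*,\ p_nxp_n\ge 0\text{ in } B(H^n)\}$; $J_p=\operatorname{span}(C(p)\cap-C(p))$; $\widetilde C(p_n)=\{(x_{ij}+J_p)\in M_n(\mathcal V/J_p):(x_{ij})\in C(p_n)\}$. An operator system is a $*$-vector space with a proper matrix ordering (cones $D_n\subseteq M_n(\cdot)_h$, $\alpha^*D_n\alpha\subseteq D_m$, $D_n\cap-D_n=\{0\}$) and an Archimedean matrix order unit. *)

(* Defs.v *)
From HB Require Import structures.
From mathcomp Require Import all_boot all_order all_algebra.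
From mathcomp Require Import reals.
From mathcomp Require Import complex.
Set Implicit Arguments. Unset Strict Implicit. Unset Printing Implicit Defensive.
Import Order.TTheory GRing.Theory Num.Theory.
Local Open Scope ring_scope.

Section OperatorSystems.
Variable R : realType.
Local Notation C := (R[i]).
(* H : a complex vector space with inner product [ip], linear in the first
   argument, conjugate-linear in the second. *)
Variable H : lmodType C.
Variable ip : H -> H -> C.

(* Cauchy sequences / convergence for the norm ||x|| = sqrt (ip x x);
   stated with squared norms. *)
Definition ip_complete : Prop :=
  forall u : nat -> H,
    (forall eps : C, 0 < eps -> exists N : nat, forall m n : nat,
        (N <= m)%N -> (N <= n)%N -> ip (u m - u n) (u m - u n) < eps) ->
    exists l : H, forall eps : C, 0 < eps -> exists N : nat, forall n : nat,
        (N <= n)%N -> ip (u n - l) (u n - l) < eps.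

Definition is_hilbert_space : Prop :=
  [/\ forall (a : C) (x y z : H), ip (a *: x + y) z = a * ip x z + ip y z,
      forall x y : H, ip y x = (ip x y)^*,
      forall x : H, 0 <= ip x x,
      forall x : H, ip x x = 0 -> x = 0
    & ip_complete].

Definition bounded_op (T : H -> H) : Prop :=
  (forall (a : C) (x y : H), T (a *: x + y) = a *: T x + T y) /\
  exists M : C, forall x : H, ip (T x) (T x) <= M * ip x x.

Definition is_adjoint (T S : H -> H) : Prop :=
  forall u v : H, ip (T u) v = ip u (S v).

Definition concrete_operator_system (V : (H -> H) -> Prop) : Prop :=
  [/\ forall T, V T -> bounded_op T,
      V (fun h => h),
      forall (a : C) (S T : H -> H), V S -> V T -> V (fun h => a *: S h + T h)
    & forall T, V T -> exists2 S, V S & is_adjoint T S].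

Definition is_projection (p : H -> H) : Prop :=
  bounded_op p /\ is_adjoint p p /\ forall h, p (p h) = p h.

Definition opmat (n : nat) := 'I_n -> 'I_n -> (H -> H).

Definition in_mat (V : (H -> H) -> Prop) n (X : opmat n) : Prop :=
  forall i j, V (X i j).

Definition herm_mat n (X : opmat n) : Prop :=
  forall i j, is_adjoint (X i j) (X j i).

(* C(p_n) = { x in M_n(V) : x = x^*, p_n x p_n >= 0 in B(H^n) },
   with p_n = I_n ⊗ p and <T v, v> = sum_i <(T v)_i, v_i>. *)
Definition Cpn (V : (H -> H) -> Prop) (p : H -> H) n (X : opmat n) : Prop :=
  [/\ in_mat V X, herm_mat X &
      forall v : 'I_n -> H,
        0 <= \sum_(i < n) ip (\sum_(j < n) p (X i j (p (v j)))) (v i)].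

Definition Cp1 V p (x : H -> H) : Prop := Cpn V p (fun (_ _ : 'I_1) => x).

(* J_p = span (C(p) ∩ -C(p)) (complex linear span) *)
Definition Jp V p (x : H -> H) : Prop :=
  exists (k : nat) (c : 'I_k -> C) (y : 'I_k -> H -> H),
    (forall i, Cp1 V p (y i) /\ Cp1 V p (fun h => - y i h)) /\
    forall h, x h = \sum_(i < k) c i *: y i h.

Definition modJ (J : (H -> H) -> Prop) (x y : H -> H) : Prop :=
  J (fun h => x h - y h).

(* Working in M_n(V/J) through representatives in M_n(V). *)
Definition herm_mod (J : (H -> H) -> Prop) n (X : opmat n) : Prop :=
  forall i j, exists2 S, is_adjoint (X i j) S & modJ J S (X j i).

Definition add_mat n (X Y : opmat n) : opmat n := fun i j h => X i j h + Y i j h.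
Definition scale_mat n (r : C) (X : opmat n) : opmat n := fun i j h => r *: X i j h.
Definition opp_mat n (X : opmat n) : opmat n := fun i j h => - X i j h.
(* alpha^* X alpha, for alpha in M_{n,m}(C) *)
Definition conj_mat n m (alpha : 'M[C]_(n, m)) (X : opmat n) : opmat m :=
  fun k l h => \sum_(i < n) \sum_(j < n) (((alpha i k)^*) * alpha j l) *: X i j h.
Definition diag_op n (e : H -> H) : opmat n :=
  fun i j h => if i == j then e h else 0.

(* (V/J, {D_n}_n, e + J) is an operator system, written via representatives:
   J is a *-closed subspace of V (so V/J is a *-vector space), each D_n is a
   subset of M_n(V/J)_h (a J-saturated set of hermitian-mod-J matrices over V),
   {D_n} is a proper matrix ordering, and e + J is an Archimedean matrix
   order unit. *)
Definition quotient_operator_system (V J : (H -> H) -> Prop)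
    (D : forall n, opmat n -> Prop) (e : H -> H) : Prop :=
  [/\
      [/\ forall x, J x -> V x,
          J (fun _ => 0),
          forall (a : C) x y, J x -> J y -> J (fun h => a *: x h + y h)
        & forall x, J x -> exists2 y, J y & is_adjoint x y],
      [/\ forall n (X : opmat n), (0 < n)%N -> D n X -> in_mat V X /\ herm_mod J X
        & forall n (X Y : opmat n), (0 < n)%N -> D n X -> in_mat V Y ->
            (forall i j, modJ J (X i j) (Y i j)) -> D n Y],
      [/\ forall n (X Y : opmat n), (0 < n)%N -> D n X -> D n Y -> D n (add_mat X Y)
        & forall n (r : C) (X : opmat n), (0 < n)%N -> 0 <= r -> D n X -> D n (scale_mat r X)],
      [/\
      (forall n m (alpha : 'M[C]_(n, m)) (X : opmat n), (0 < n)%N -> (0 < m)%N ->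
          D n X -> D m (conj_mat alpha X)) &
      (forall n (X : opmat n), (0 < n)%N -> D n X -> D n (opp_mat X) ->
          forall i j, J (X i j))] &
      [/\ V e,
          (exists2 S, is_adjoint e S & modJ J S e),
          (forall n (X : opmat n), (0 < n)%N -> in_mat V X -> herm_mod J X ->
             exists2 r : C, 0 < r & D n (add_mat (scale_mat r (@diag_op n e)) (opp_mat X)))
        & (forall n (X : opmat n), (0 < n)%N -> in_mat V X -> herm_mod J X ->
             (forall r : C, 0 < r -> D n (add_mat (scale_mat r (@diag_op n e)) X)) ->
             D n X)]].

(* the cones C~(p_n) = image of C(p_n) in M_n(V/J_p), via representatives *)
Definition Ctilde V p n (X : opmat n) : Prop :=
  in_mat V X /\
  exists2 Y : opmat n, Cpn V p Y & forall i j, modJ (Jp V p) (X i j) (Y i j).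

End OperatorSystems.

(* Main.v *)
Require Import Defs.
From HB Require Import structures.
From mathcomp Require Import all_boot all_order all_algebra.
From mathcomp Require Import reals complex.
From Stdlib Require Import FunctionalExtensionality IndefiniteDescription.
From mathcomp Require Import ring.
Set Implicit Arguments. Unset Strict Implicit. Unset Printing Implicit Defensive.
Import Order.TTheory GRing.Theory Num.Theory.
Local Open Scope ring_scope.

Section Basic.
Variable R : realType.
Local Notation C := R[i].
Variable H : lmodType C.
Variable ip : H -> H -> C.
Hypothesis hil : is_hilbert_space ip.

Lemma ipDZl a x y z : ip (a *: x + y) z = a * ip x z + ip y z.
Proof. by case: hil => h1 h2 h3 h4 h5; auto. Qed.
Lemma ipC x y : ip y x = (ip x y)^*.
Proof. by case: hil => h1 h2 h3 h4 h5; auto. Qed.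
Lemma ip_ge0 x : 0 <= ip x x.
Proof. by case: hil => h1 h2 h3 h4 h5; auto. Qed.
Lemma ip_eq0 x : ip x x = 0 -> x = 0.
Proof. by case: hil => h1 h2 h3 h4 h5; auto. Qed.
Lemma ip0l z : ip 0 z = 0.
Proof.
have := ipDZl 1 0 0 z; rewrite scaler0 add0r mul1r.
by move/(congr1 (fun t => t - ip 0 z)); rewrite subrr addrK.
Qed.
Lemma ipDl x y z : ip (x + y) z = ip x z + ip y z.
Proof. by have := ipDZl 1 x y z; rewrite scale1r mul1r. Qed.
Lemma ipZl a x z : ip (a *: x) z = a * ip x z.
Proof. by have := ipDZl a x 0 z; rewrite addr0 ip0l addr0. Qed.
Lemma ipNl x z : ip (- x) z = - ip x z.
Proof. by rewrite -scaleN1r ipZl mulN1r. Qed.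
Lemma ipBl x y z : ip (x - y) z = ip x z - ip y z.
Proof. by rewrite ipDl ipNl. Qed.
Lemma ip_suml (I : Type) (r : seq I) (P : pred I) (F : I -> H) z :
  ip (\sum_(i <- r | P i) F i) z = \sum_(i <- r | P i) ip (F i) z.
Proof. by apply: (big_morph (fun x => ip x z)) => [x y|]; [exact: ipDl|exact: ip0l]. Qed.
Lemma ip0r z : ip z 0 = 0.
Proof. by rewrite (ipC 0 z) ip0l conjC0. Qed.
Lemma ipDr x y z : ip z (x + y) = ip z x + ip z y.
Proof. by rewrite (ipC (x + y) z) (ipC x z) (ipC y z) ipDl rmorphD. Qed.
Lemma ipZr a x z : ip z (a *: x) = a^* * ip z x.
Proof. by rewrite (ipC (a *: x) z) (ipC x z) ipZl rmorphM. Qed.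
Lemma ipNr x z : ip z (- x) = - ip z x.
Proof. by rewrite -scaleN1r ipZr rmorphN rmorph1 mulN1r. Qed.
Lemma ipBr x y z : ip z (x - y) = ip z x - ip z y.
Proof. by rewrite ipDr ipNr. Qed.
Lemma ip_sumr (I : Type) (r : seq I) (P : pred I) (F : I -> H) z :
  ip z (\sum_(i <- r | P i) F i) = \sum_(i <- r | P i) ip z (F i).
Proof. by apply: (big_morph (fun x => ip z x)) => [x y|]; [exact: ipDr|exact: ip0r]. Qed.
Lemma ip_eqr a b : (forall w, ip a w = ip b w) -> a = b.
Proof.
move=> h; apply/eqP; rewrite -subr_eq0; apply/eqP; apply: ip_eq0.
by rewrite ipBl h subrr.
Qed.
Lemma ip_eql a b : (forall w, ip w a = ip w b) -> a = b.
Proof. by move=> h; apply: ip_eqr => w; rewrite (ipC w a) (ipC w b) h. Qed.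

Lemma ip_sym_le a b : ip a b + ip b a <= ip a a + ip b b.
Proof.
rewrite -subr_ge0.
have -> : ip a a + ip b b - (ip a b + ip b a) = ip (a - b) (a - b).
  by rewrite ipBl !ipBr; ring.
exact: ip_ge0.
Qed.

Definition lin (T : H -> H) := forall (a : C) x y, T (a *: x + y) = a *: T x + T y.

Section Lin.
Variable T : H -> H.
Hypothesis hT : lin T.
Lemma lin0 : T 0 = 0.
Proof.
have := hT 1 0 0; rewrite scaler0 add0r scale1r.
by move/(congr1 (fun t => t - T 0)); rewrite subrr addrK.
Qed.
Lemma linD x y : T (x + y) = T x + T y.
Proof. by have := hT 1 x y; rewrite !scale1r. Qed.
Lemma linZ a x : T (a *: x) = a *: T x.
Proof. by have := hT a x 0; rewrite !addr0 lin0 addr0. Qed.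
Lemma linN x : T (- x) = - T x.
Proof. by rewrite -scaleN1r linZ scaleN1r. Qed.
Lemma linB x y : T (x - y) = T x - T y.
Proof. by rewrite linD linN. Qed.
Lemma lin_sum (I : Type) (r : seq I) (P : pred I) (F : I -> H) :
  T (\sum_(i <- r | P i) F i) = \sum_(i <- r | P i) T (F i).
Proof. by apply: (big_morph T) => [x y|]; [exact: linD|exact: lin0]. Qed.
End Lin.

Lemma adj_sym T S : is_adjoint ip T S -> forall u v, ip (S u) v = ip u (T v).
Proof. by move=> h u v; rewrite (ipC v (S u)) -h -ipC. Qed.
Lemma adj_ext T S T' S' : is_adjoint ip T S -> (forall h, T' h = T h) ->
  (forall h, S' h = S h) -> is_adjoint ip T' S'.
Proof. by move=> h e1 e2 u v; rewrite e1 e2 h. Qed.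
Lemma adj_comb (a b : C) T1 S1 T2 S2 : is_adjoint ip T1 S1 -> is_adjoint ip T2 S2 ->
  is_adjoint ip (fun h => a *: T1 h + b *: T2 h) (fun h => a^* *: S1 h + b^* *: S2 h).
Proof.
by move=> h1 h2 u v; rewrite ipDl !ipZl ipDr !ipZr !conjCK h1 h2.
Qed.
Lemma adj_sum2 (I : finType) (c : I -> I -> C) (T S : I -> I -> H -> H) :
  (forall i j, is_adjoint ip (T i j) (S i j)) ->
  is_adjoint ip (fun h => \sum_i \sum_j c i j *: T i j h)
                (fun h => \sum_i \sum_j (c i j)^* *: S i j h).
Proof.
move=> hs u v; rewrite ip_suml ip_sumr; apply: eq_bigr => i _ /=.
rewrite ip_suml ip_sumr; apply: eq_bigr => j _ /=.
by rewrite ipZl ipZr conjCK hs.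
Qed.
Lemma adj_unique T S S' : is_adjoint ip T S -> is_adjoint ip T S' -> forall h, S h = S' h.
Proof. by move=> h1 h2 h; apply: ip_eql => w; rewrite -h1 -h2. Qed.


Section Op.
Variable V : (H -> H) -> Prop.
Variable p : H -> H.
Hypothesis osV : concrete_operator_system ip V.
Hypothesis Vp : V p.
Hypothesis prj : is_projection ip p.

Lemma V_bounded T : V T -> bounded_op ip T.
Proof. by case: osV => h _ _ _; apply: h. Qed.
Lemma V_lin T : V T -> lin T.
Proof. by move/V_bounded => []. Qed.
Lemma p_lin : lin p. Proof. by case: prj => [[]]. Qed.
Lemma p_adj : is_adjoint ip p p. Proof. by case: prj => _ []. Qed.
Lemma p_idem h : p (p h) = p h. Proof. by case: prj => _ [] _ ->. Qed.
Lemma V_comb a S T : V S -> V T -> V (fun h => a *: S h + T h).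
Proof. by case: osV => _ _ h _; apply: h. Qed.
Lemma V_id : V (fun h => h). Proof. by case: osV. Qed.
Lemma V_adj T : V T -> exists2 S, V S & is_adjoint ip T S.
Proof. by case: osV => _ _ _ h; apply: h. Qed.
Lemma V0 : V (fun _ => 0).
Proof.
have -> : (fun _ : H => 0) = (fun h => (-1) *: h + h).
  by apply: functional_extensionality => h; rewrite scaleN1r addNr.
exact: (V_comb _ V_id V_id).
Qed.
Lemma V_ext S T : V S -> (forall h, T h = S h) -> V T.
Proof. by move=> hS e; have -> : T = S by apply: functional_extensionality. Qed.
Lemma V_scale a T : V T -> V (fun h => a *: T h).
Proof. by move=> hT; apply: V_ext (V_comb a hT V0) _ => h; rewrite addr0. Qed.
Lemma V_add S T : V S -> V T -> V (fun h => S h + T h).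
Proof. by move=> hS hT; apply: V_ext (V_comb 1 hS hT) _ => h; rewrite scale1r. Qed.
Lemma V_opp T : V T -> V (fun h => - T h).
Proof. by move=> hT; apply: V_ext (V_scale (-1) hT) _ => h; rewrite scaleN1r. Qed.
Lemma V_sub S T : V S -> V T -> V (fun h => S h - T h).
Proof. by move=> hS hT; apply: V_add hS (V_opp hT). Qed.
Lemma V_sum (I : Type) (r : seq I) (F : I -> H -> H) :
  (forall i, V (F i)) -> V (fun h => \sum_(i <- r) F i h).
Proof.
move=> hF; elim: r => [|a r IH].
  by apply: V_ext V0 _ => h; rewrite big_nil.
by apply: V_ext (V_add (hF a) IH) _ => h; rewrite big_cons.
Qed.

Lemma bounded_ge0 T : bounded_op ip T ->
  exists M : C, 0 <= M /\ forall x, ip (T x) (T x) <= M * ip x x.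
Proof.
case=> hl [M hM]; exists `|M|; split => // x.
have [x0|xn0] := eqVneq (ip x x) 0.
  by move/ip_eq0: x0 => ->; rewrite (lin0 hl) ip0l mulr0.
have xp : 0 < ip x x by rewrite lt_def xn0 ip_ge0.
have M0 : 0 <= M.
  by rewrite -(pmulr_lge0 _ xp); apply: le_trans (hM x); apply: ip_ge0.
by rewrite ger0_norm.
Qed.

Definition ceq (T U : H -> H) := forall h, p (T (p h)) = p (U (p h)).

Definition qf n (Y : opmat H n) (v w : 'I_n -> H) :=
  \sum_(i < n) ip (\sum_(j < n) p (Y i j (p (v j)))) (w i).

Section QF.
Variable n : nat.
Implicit Types (X Y : opmat H n) (v w : 'I_n -> H).

Lemma qfDl Y v v' w : (forall i j, lin (Y i j)) ->
  qf Y (fun k => v k + v' k) w = qf Y v w + qf Y v' w.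
Proof.
move=> hY; rewrite /qf -big_split /=; apply: eq_bigr => i _ /=.
rewrite -ipDl -big_split /=; congr ip; apply: eq_bigr => j _ /=.
by rewrite (linD p_lin) (linD (hY _ _)) (linD p_lin).
Qed.
Lemma qfZl Y a v w : (forall i j, lin (Y i j)) ->
  qf Y (fun k => a *: v k) w = a * qf Y v w.
Proof.
move=> hY; rewrite /qf mulr_sumr; apply: eq_bigr => i _ /=.
rewrite -ipZl scaler_sumr; congr ip; apply: eq_bigr => j _ /=.
by rewrite (linZ p_lin) (linZ (hY _ _)) (linZ p_lin).
Qed.
Lemma qfDr Y v w w' : qf Y v (fun k => w k + w' k) = qf Y v w + qf Y v w'.
Proof. by rewrite /qf -big_split; apply: eq_bigr => i _; rewrite ipDr. Qed.
Lemma qfZr Y a v w : qf Y v (fun k => a *: w k) = a^* * qf Y v w.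
Proof. by rewrite /qf mulr_sumr; apply: eq_bigr => i _; rewrite ipZr. Qed.
Lemma qf_add X Y v w : qf (add_mat X Y) v w = qf X v w + qf Y v w.
Proof.
rewrite /qf -big_split; apply: eq_bigr => i _ /=.
by rewrite -ipDl -big_split; congr ip; apply: eq_bigr => j _; rewrite /add_mat (linD p_lin).
Qed.
Lemma qf_scale r X v w : qf (scale_mat r X) v w = r * qf X v w.
Proof.
rewrite /qf mulr_sumr; apply: eq_bigr => i _ /=.
by rewrite -ipZl scaler_sumr; congr ip; apply: eq_bigr => j _; rewrite /scale_mat (linZ p_lin).
Qed.
Lemma qf_opp X v w : qf (opp_mat X) v w = - qf X v w.
Proof.
rewrite /qf -sumrN; apply: eq_bigr => i _ /=.
by rewrite -ipNl -sumrN; congr ip; apply: eq_bigr => j _; rewrite /opp_mat (linN p_lin).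
Qed.
Lemma qf_ceq X Y v w : (forall i j, ceq (X i j) (Y i j)) -> qf X v w = qf Y v w.
Proof. by move=> e; rewrite /qf; apply: eq_bigr => i _; congr ip; apply: eq_bigr => j _; rewrite e. Qed.

Definition nrm v := \sum_(i < n) ip (p (v i)) (p (v i)).
Lemma nrm_ge0 v : 0 <= nrm v.
Proof. by apply: sumr_ge0 => i _; apply: ip_ge0. Qed.
Lemma qf_diag v : qf (@diag_op _ _ n p) v v = nrm v.
Proof.
rewrite /qf /nrm; apply: eq_bigr => i _ /=.
rewrite (bigD1 i) //= big1 ?addr0 /diag_op ?eqxx.
  by rewrite !p_idem -{1}p_idem p_adj.
by move=> j /negPf; rewrite eq_sym => ->; rewrite (lin0 p_lin).
Qed.

Lemma L_zero Y : (forall i j, lin (Y i j)) -> (forall v, qf Y v v = 0) ->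
  forall i j h, p (Y i j (p h)) = 0.
Proof.
move=> hY h0.
have hvw : forall v w, qf Y v w = 0.
  move=> v w.
  have h1 := h0 (fun k => v k + w k).
  rewrite qfDl // !qfDr !h0 add0r addr0 in h1.
  have h2 := h0 (fun k => v k + 'i *: w k).
  rewrite qfDl // !qfDr !qfZl // !qfZr !h0 !mulr0 add0r addr0 conjCi in h2.
  rewrite mulNr addrC -mulrBr in h2.
  move/eqP: h2; rewrite mulf_eq0 (negPf (neq0Ci _)) /= subr_eq0 => /eqP h2.
  move/eqP: h1; rewrite h2 -mulr2n mulrn_eq0 /=.
  by move/eqP.
move=> i j h.
set g := p (Y i j (p h)).
have := hvw (fun k => if k == j then h else 0) (fun k => if k == i then g else 0).
rewrite /qf (bigD1 i) //= eqxx [X in _ + X]big1 ?addr0; last first.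
  by move=> k /negPf ->; rewrite ip0r.
rewrite (bigD1 j) //= eqxx [X in _ + X]big1 ?addr0; last first.
  by move=> k /negPf ->; rewrite (lin0 p_lin) (lin0 (hY _ _)) (lin0 p_lin).
exact: ip_eq0.
Qed.
End QF.


Lemma ceq_refl T : ceq T T. Proof. by []. Qed.
Lemma ceq_sym T U : ceq T U -> ceq U T. Proof. by move=> e h; rewrite e. Qed.
Lemma ceq_trans T U W : ceq T U -> ceq U W -> ceq T W.
Proof. by move=> e1 e2 h; rewrite e1 e2. Qed.

Lemma ceq_adj T S T' S' : is_adjoint ip T S -> is_adjoint ip T' S' -> ceq T T' -> ceq S S'.
Proof.
move=> a a' e h; apply: ip_eqr => w.
by rewrite !p_adj (adj_sym a) (adj_sym a') !p_adj e.
Qed.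

Lemma adj_scale a T S : is_adjoint ip T S ->
  is_adjoint ip (fun h => a *: T h) (fun h => a^* *: S h).
Proof. by move=> hs u v; rewrite ipZl ipZr conjCK hs. Qed.
Lemma adj_add T S T' S' : is_adjoint ip T S -> is_adjoint ip T' S' ->
  is_adjoint ip (fun h => T h + T' h) (fun h => S h + S' h).
Proof. by move=> h1 h2 u v; rewrite ipDl ipDr h1 h2. Qed.
Lemma adj_opp T S : is_adjoint ip T S -> is_adjoint ip (fun h => - T h) (fun h => - S h).
Proof. by move=> h1 u v; rewrite ipNl ipNr h1. Qed.

Lemma Cp1_V y : Cp1 ip V p y -> V y.
Proof. by case=> hin _ _; exact: hin ord0 ord0. Qed.

Lemma half_conj : (2^-1 : C)^* = 2^-1.
Proof. by rewrite conj_Creal // rpredV realn. Qed.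
Lemma half2 : (2^-1 : C) + 2^-1 = 1.
Proof. by field. Qed.

Lemma Cp1_of T : V T -> is_adjoint ip T T -> (forall h, p (T (p h)) = 0) -> Cp1 ip V p T.
Proof.
move=> VT aT hT; split => //= v.
rewrite big1 ?lexx // => i _.
by rewrite big1 ?ip0l // => j _; apply: hT.
Qed.

Lemma Jchar x : Jp ip V p x <-> V x /\ (forall h, p (x (p h)) = 0).
Proof.
split.
  case=> k [c [y [hy hx]]].
  have hy0 : forall i h, p (y i (p h)) = 0.
    move=> i h; have [[hin hh hpos] [_ _ hneg]] := hy i.
    have Vy : V (y i) := hin ord0 ord0.
    apply: (@L_zero 1 (fun _ _ => y i) (fun _ _ => V_lin Vy) _ ord0 ord0 h) => v.
    apply/eqP; rewrite eq_le.
    have h1 : 0 <= qf (opp_mat (fun _ _ : 'I_1 => y i)) v v := hneg v.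
    rewrite qf_opp oppr_ge0 in h1.
    by rewrite h1 /=; exact: hpos v.
  split.
    apply: V_ext (V_sum (index_enum _) (F := fun i h => c i *: y i h) _) hx.
    by move=> i; apply: V_scale; apply: Cp1_V (proj1 (hy i)).
  move=> h; rewrite hx (lin_sum p_lin) big1 // => i _.
  by rewrite (linZ p_lin) hy0 scaler0.
case=> Vx hx0.
have [S VS aS] := V_adj Vx.
have aS' : is_adjoint ip S x := adj_sym aS.
have hS0 : forall h, p (S (p h)) = 0.
  move=> h; apply: ip_eqr => w.
  by rewrite ip0l p_adj (adj_sym aS) p_adj hx0 ip0r.
pose c : C := 2^-1.
pose d : C := (2 * 'i)^-1.
have cc : c^* = c by exact: half_conj.
have dd : d^* = - d.
  by rewrite /d fmorphV rmorphM /= conjCi conjC_nat mulrN invrN.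
have e1 : 'i * d = c.
  by rewrite /d invfM mulrCA mulfV ?neq0Ci ?mulr1.
pose Re := fun h => c *: x h + c *: S h.
pose Im := fun h => d *: x h + (- d) *: S h.
have VRe : V Re by apply: V_comb Vx (V_scale c VS).
have VIm : V Im by apply: V_comb Vx (V_scale (- d) VS).
have aRe : is_adjoint ip Re Re.
  apply: adj_ext (adj_comb c c aS aS') _ _ => // h.
  by rewrite /Re cc addrC.
have aIm : is_adjoint ip Im Im.
  apply: adj_ext (adj_comb d (- d) aS aS') _ _ => // h.
  by rewrite /Im rmorphN /= dd opprK addrC.
have pRe : forall h, p (Re (p h)) = 0.
  by move=> h; rewrite /Re (linD p_lin) !(linZ p_lin) hx0 hS0 !scaler0 addr0.
have pIm : forall h, p (Im (p h)) = 0.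
  by move=> h; rewrite /Im (linD p_lin) !(linZ p_lin) hx0 hS0 !scaler0 addr0.
have key : forall T, V T -> is_adjoint ip T T -> (forall h, p (T (p h)) = 0) ->
    Cp1 ip V p T /\ Cp1 ip V p (fun h => - T h).
  move=> T VT aT hT; split; first exact: Cp1_of.
  apply: Cp1_of; first exact: V_opp.
    exact: adj_opp.
  by move=> h; rewrite (linN p_lin) hT oppr0.
exists 2%N, (fun i : 'I_2 => if i == ord0 then 1 else 'i),
  (fun i : 'I_2 => if i == ord0 then Re else Im); split.
  by move=> i; case: (i == ord0); apply: key.
move=> h; rewrite big_ord_recl big_ord1 /= scale1r /Re /Im.
rewrite !scalerDr !scalerA e1 mulrN e1 scaleNr.
by rewrite addrACA subrr addr0 -scalerDl half2 scale1r.
Qed.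

Lemma modJ_iff T U : V T -> V U -> (modJ (Jp ip V p) T U <-> ceq T U).
Proof.
move=> VT VU; rewrite /modJ Jchar; split.
  by case=> _ h0 h; apply/eqP; rewrite -subr_eq0 -(linB p_lin) h0.
move=> e; split; first exact: V_sub.
by move=> h; rewrite (linB p_lin) e subrr.
Qed.


Lemma V_diag n i j : V (@diag_op _ _ n p i j).
Proof. by rewrite /diag_op; case: (i == j); [exact: Vp | exact: V0]. Qed.
Lemma adj_diag n i j : is_adjoint ip (@diag_op _ _ n p i j) (diag_op p j i).
Proof.
rewrite /diag_op eq_sym; case: (j == i) => u v; first exact: p_adj.
by rewrite ip0l ip0r.
Qed.

Lemma Ctilde_iff n (X : opmat H n) : Ctilde ip V p X <->
  in_mat V X /\ exists2 Y, Cpn ip V p Y & forall i j, ceq (X i j) (Y i j).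
Proof.
split; case=> hX [Y hY e]; split => //; exists Y => // i j;
  have VY : in_mat V Y by case: hY.
  exact/(modJ_iff (hX i j) (VY i j)).
exact/(modJ_iff (hX i j) (VY i j)).
Qed.

Lemma herm_rep n (X : opmat H n) : in_mat V X -> herm_mod ip (Jp ip V p) X ->
  exists X' : opmat H n, [/\ in_mat V X', herm_mat ip X' & forall i j, ceq (X i j) (X' i j)].
Proof.
move=> VX hX.
have hA : forall i j, exists S, V S /\ is_adjoint ip (X i j) S.
  by move=> i j; have [S VS aS] := V_adj (VX i j); exists S.
pose A i j := proj1_sig (constructive_indefinite_description _ (hA i j)).
have hA' : forall i j, V (A i j) /\ is_adjoint ip (X i j) (A i j).
  by move=> i j; exact: (proj2_sig (constructive_indefinite_description _ (hA i j))).
pose c : C := 2^-1.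
exists (fun i j h => c *: X i j h + c *: A j i h); split.
- move=> i j; apply: V_comb (VX i j) (V_scale c (proj1 (hA' j i))).
- move=> i j.
  apply: adj_ext (adj_comb c c (proj2 (hA' i j)) (adj_sym (proj2 (hA' j i)))) _ _ => // h.
  by rewrite half_conj addrC.
- move=> i j.
  have [S aS mS] := hX j i.
  have VS : V S.
    have VSX : V (fun h => S h - X i j h) by case/Jchar: mS.
    by apply: V_ext (V_add VSX (VX i j)) _ => h; rewrite subrK.
  have e1 : ceq S (X i j) by apply/(modJ_iff VS (VX i j)).
  have e2 : ceq (A j i) (X i j).
    exact: ceq_trans (ceq_adj (proj2 (hA' j i)) aS (ceq_refl _)) e1.
  move=> h; rewrite (linD p_lin) !(linZ p_lin) e2.
  by rewrite -scalerDl half2 scale1r.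
Qed.

Lemma common_bound n (T : 'I_n -> 'I_n -> H -> H) : (forall i j, V (T i j)) ->
  exists K : C, 0 <= K /\ forall i j x, ip (T i j x) (T i j x) <= K * ip x x.
Proof.
move=> hT.
have hb : forall i j, exists M : C, 0 <= M /\ forall x, ip (T i j x) (T i j x) <= M * ip x x.
  by move=> i j; apply: bounded_ge0; apply: V_bounded.
pose M i j := proj1_sig (constructive_indefinite_description _ (hb i j)).
have hM : forall i j, 0 <= M i j /\ forall x, ip (T i j x) (T i j x) <= M i j * ip x x.
  by move=> i j; exact: (proj2_sig (constructive_indefinite_description _ (hb i j))).
exists (\sum_i \sum_j M i j); split.
  by apply: sumr_ge0 => i _; apply: sumr_ge0 => j _; exact: (proj1 (hM i j)).
move=> i j x; apply: le_trans (proj2 (hM i j) x) _; apply: ler_wpM2r; first exact: ip_ge0.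
apply: (@le_trans _ _ (\sum_j' M i j')).
  by rewrite (bigD1 j) //= lerDl sumr_ge0 // => k _; exact: (proj1 (hM i k)).
rewrite [X in _ <= X](bigD1 i) //= lerDl sumr_ge0 // => k _.
by apply: sumr_ge0 => l _; exact: (proj1 (hM k l)).
Qed.

Lemma qf_conj n m (alpha : 'M[C]_(n, m)) (Y : opmat H n) v : (forall i j, lin (Y i j)) ->
  qf (conj_mat alpha Y) v v =
  qf Y (fun j => \sum_l alpha j l *: v l) (fun j => \sum_l alpha j l *: v l).
Proof.
move=> hY.
have L : qf (conj_mat alpha Y) v v = \sum_k \sum_l \sum_i \sum_j
    ((alpha i k)^* * alpha j l) * ip (p (Y i j (p (v l)))) (v k).
  rewrite /qf /conj_mat; apply: eq_bigr => k _; rewrite ip_suml; apply: eq_bigr => l _.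
  rewrite (lin_sum p_lin) ip_suml; apply: eq_bigr => i _.
  rewrite (lin_sum p_lin) ip_suml; apply: eq_bigr => j _.
  by rewrite (linZ p_lin) ipZl.
have Rr : qf Y (fun j => \sum_l alpha j l *: v l) (fun j => \sum_l alpha j l *: v l) =
    \sum_i \sum_j \sum_k \sum_l
    (alpha i k)^* * (alpha j l * ip (p (Y i j (p (v l)))) (v k)).
  rewrite /qf; apply: eq_bigr => i _; rewrite ip_suml; apply: eq_bigr => j _.
  rewrite ip_sumr; apply: eq_bigr => k _; rewrite ipZr -mulr_sumr; congr (_ * _).
  rewrite (lin_sum p_lin) (lin_sum (hY i j)) (lin_sum p_lin) ip_suml.
  apply: eq_bigr => l _.
  by rewrite (linZ p_lin) (linZ (hY i j)) (linZ p_lin) ipZl.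
rewrite L Rr.
under eq_bigr => k _ do rewrite exchange_big.
rewrite exchange_big.
under eq_bigr => i _ do under eq_bigr => k _ do rewrite exchange_big.
under eq_bigr => i _ do rewrite exchange_big.
apply: eq_bigr => i _; apply: eq_bigr => j _; apply: eq_bigr => k _; apply: eq_bigr => l _.
by rewrite mulrA.
Qed.

Lemma herm_conj n m (alpha : 'M[C]_(n, m)) (Y : opmat H n) :
  herm_mat ip Y -> herm_mat ip (conj_mat alpha Y).
Proof.
move=> hY k l.
apply: adj_ext (adj_sum2 (fun i j => (alpha i k)^* * alpha j l) (fun i j => hY i j)) _ _ => // h.
rewrite /conj_mat exchange_big; apply: eq_bigr => a _; apply: eq_bigr => b _.
by congr (_ *: _); rewrite rmorphM /= conjCK mulrC.
Qed.

Lemma V_conj n m (alpha : 'M[C]_(n, m)) (X : opmat H n) :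
  in_mat V X -> in_mat V (conj_mat alpha X).
Proof.
move=> VX k l.
apply: (V_sum (index_enum _) (F := fun i h => \sum_j ((alpha i k)^* * alpha j l) *: X i j h)) => i.
apply: (V_sum (index_enum _) (F := fun j h => ((alpha i k)^* * alpha j l) *: X i j h)) => j.
exact: V_scale.
Qed.

Lemma ceq_conj n m (alpha : 'M[C]_(n, m)) (X Y : opmat H n) :
  (forall i j, ceq (X i j) (Y i j)) -> forall k l, ceq (conj_mat alpha X k l) (conj_mat alpha Y k l).
Proof.
move=> e k l h; rewrite /conj_mat !(lin_sum p_lin); apply: eq_bigr => i _.
rewrite !(lin_sum p_lin); apply: eq_bigr => j _.
by rewrite !(linZ p_lin) e.
Qed.

Lemma J_V x : Jp ip V p x -> V x.
Proof. by case/Jchar. Qed.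
Lemma J0 : Jp ip V p (fun _ => 0).
Proof. by apply/Jchar; split; [exact: V0 | move=> h; exact: (lin0 p_lin)]. Qed.
Lemma J_comb (a : C) x y : Jp ip V p x -> Jp ip V p y -> Jp ip V p (fun h => a *: x h + y h).
Proof.
case/Jchar=> Vx hx; case/Jchar=> Vy hy; apply/Jchar; split; first exact: V_comb.
by move=> h; rewrite (linD p_lin) (linZ p_lin) hx hy scaler0 addr0.
Qed.
Lemma J_adj x : Jp ip V p x -> exists2 y, Jp ip V p y & is_adjoint ip x y.
Proof.
case/Jchar=> Vx hx; have [S VS aS] := V_adj Vx; exists S => //.
have a0 : is_adjoint ip (fun _ : H => 0) (fun _ : H => 0) by move=> u v; rewrite ip0l ip0r.
have e0 : ceq x (fun _ => 0) by move=> h; rewrite hx (lin0 p_lin).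
have e := ceq_adj aS a0 e0.
by apply/Jchar; split => // h; rewrite e (lin0 p_lin).
Qed.

Lemma Ct_herm n (X : opmat H n) : Ctilde ip V p X -> in_mat V X /\ herm_mod ip (Jp ip V p) X.
Proof.
move=> /Ctilde_iff [VX [Y [VY hY _] eY]]; split => // i j.
have [S VS aS] := V_adj (VX i j).
exists S => //; apply/(modJ_iff VS (VX j i)).
exact: ceq_trans (ceq_adj aS (hY i j) (eY i j)) (ceq_sym (eY j i)).
Qed.

Lemma Ct_sat n (X Y : opmat H n) : Ctilde ip V p X -> in_mat V Y ->
  (forall i j, modJ (Jp ip V p) (X i j) (Y i j)) -> Ctilde ip V p Y.
Proof.
move=> /Ctilde_iff [VX [Z hZ eZ]] VY e; apply/Ctilde_iff; split => //; exists Z => // i j.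
exact: ceq_trans (ceq_sym ((modJ_iff (VX i j) (VY i j)).1 (e i j))) (eZ i j).
Qed.

Lemma Ct_add n (X Y : opmat H n) : Ctilde ip V p X -> Ctilde ip V p Y ->
  Ctilde ip V p (add_mat X Y).
Proof.
move=> /Ctilde_iff [VX [X0 [VX0 hX0 pX0] eX]] /Ctilde_iff [VY [Y0 [VY0 hY0 pY0] eY]].
apply/Ctilde_iff; split; first by move=> i j; exact: V_add (VX i j) (VY i j).
exists (add_mat X0 Y0).
  split; first by move=> i j; exact: V_add (VX0 i j) (VY0 i j).
    by move=> i j; exact: adj_add.
  move=> v; change (0 <= qf (add_mat X0 Y0) v v); rewrite qf_add addr_ge0 //.
    exact: pX0 v.
  exact: pY0 v.
by move=> i j h; rewrite /add_mat !(linD p_lin) eX eY.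
Qed.

Lemma Ct_scale n (r : C) (X : opmat H n) : 0 <= r -> Ctilde ip V p X ->
  Ctilde ip V p (scale_mat r X).
Proof.
move=> r0 /Ctilde_iff [VX [X0 [VX0 hX0 pX0] eX]].
apply/Ctilde_iff; split; first by move=> i j; exact: V_scale (VX i j).
exists (scale_mat r X0).
  split; first by move=> i j; exact: V_scale (VX0 i j).
    move=> i j; apply: adj_ext (adj_scale r (hX0 i j)) _ _ => // h.
    by rewrite /scale_mat conj_Creal // ger0_real.
  move=> v; change (0 <= qf (scale_mat r X0) v v); rewrite qf_scale mulr_ge0 //.
  exact: pX0 v.
by move=> i j h; rewrite /scale_mat !(linZ p_lin) eX.
Qed.

Lemma Ct_conj n m (alpha : 'M[C]_(n, m)) (X : opmat H n) : Ctilde ip V p X ->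
  Ctilde ip V p (conj_mat alpha X).
Proof.
move=> /Ctilde_iff [VX [X0 [VX0 hX0 pX0] eX]].
apply/Ctilde_iff; split; first exact: V_conj.
exists (conj_mat alpha X0); last exact: ceq_conj.
split; [exact: V_conj | exact: herm_conj |].
move=> v; change (0 <= qf (conj_mat alpha X0) v v).
rewrite qf_conj; last by move=> i j; apply: V_lin.
exact: pX0.
Qed.

Lemma Ct_proper n (X : opmat H n) : Ctilde ip V p X -> Ctilde ip V p (opp_mat X) ->
  forall i j, Jp ip V p (X i j).
Proof.
move=> /Ctilde_iff [VX [Y [VY hY hYp] eY]] /Ctilde_iff [_ [Z [VZ hZ hZp] eZ]] i j.
apply/Jchar; split; first exact: VX i j.
have hq : forall v, qf Y v v = 0.
  move=> v; apply/eqP; rewrite eq_le.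
  have h1 : 0 <= qf Y v v := hYp v.
  have h2 : 0 <= qf Z v v := hZp v.
  rewrite -(qf_ceq v v eZ) qf_opp (qf_ceq v v eY) oppr_ge0 in h2.
  by rewrite h1 h2.
move=> h; rewrite eY; exact: (L_zero (fun i j => V_lin (VY i j)) hq).
Qed.

Lemma arch_a n (X : opmat H n) : (0 < n)%N -> in_mat V X -> herm_mod ip (Jp ip V p) X ->
  exists2 r : C, 0 < r & Ctilde ip V p (add_mat (scale_mat r (diag_op p)) (opp_mat X)).
Proof.
move=> n0 VX hX.
have [X' [VX' hX' eX]] := herm_rep VX hX.
have [K [K0 hK]] := common_bound VX'.
pose r : C := n%:R * (K + 1).
have r0 : 0 < r by rewrite /r mulr_gt0 // ?ltr0n // ltr_wpDl.
exists r => //.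
apply/Ctilde_iff; split.
  move=> i j; rewrite /add_mat /scale_mat /opp_mat.
  exact: V_add (V_scale r (V_diag i j)) (V_opp (VX i j)).
exists (add_mat (scale_mat r (diag_op p)) (opp_mat X')); last first.
  move=> i j h; rewrite /add_mat /scale_mat /opp_mat !(linD p_lin) !(linZ p_lin) !(linN p_lin).
  by rewrite eX.
split.
- move=> i j; rewrite /add_mat /scale_mat /opp_mat.
  exact: V_add (V_scale r (V_diag i j)) (V_opp (VX' i j)).
- move=> i j.
  apply: adj_ext (adj_add (adj_scale r (adj_diag i j)) (adj_opp (hX' i j))) _ _ => // h.
  by rewrite /add_mat /scale_mat /opp_mat conj_Creal // ger0_real // ltW.
move=> v; change (0 <= qf (add_mat (scale_mat r (diag_op p)) (opp_mat X')) v v).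
rewrite qf_add qf_scale qf_diag qf_opp.
set G := qf X' v v; set N := nrm v.
pose u i := p (v i).
have eG : G = \sum_i \sum_j ip (X' i j (u j)) (u i).
  by rewrite /G /qf; apply: eq_bigr => i _; rewrite ip_suml; apply: eq_bigr => j _; rewrite p_adj.
have eG' : G = \sum_i \sum_j ip (u i) (X' i j (u j)).
  rewrite eG exchange_big; apply: eq_bigr => i _; apply: eq_bigr => j _.
  exact: hX' j i (u i) (u j).
have G2 : G + G <= r * N.
  have -> : r * N = \sum_i \sum_j (K * ip (u j) (u j) + ip (u i) (u i)).
    under eq_bigr => i _ do rewrite big_split /= -mulr_sumr sumr_const card_ord.
    rewrite big_split /= sumr_const card_ord sumrMnl /r /N /nrm /u; ring.
  rewrite {1}eG eG' -big_split /=; apply: ler_sum => i _.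
  rewrite -big_split /=; apply: ler_sum => j _.
  exact: le_trans (ip_sym_le _ _) (lerD (hK i j (u j)) (lexx _)).
have hN : 0 <= N := nrm_ge0 v.
have h : 0 <= (r * N - (G + G)) + r * N.
  by rewrite addr_ge0 // ?subr_ge0 // mulr_ge0 // ltW.
have -> : r * N + - G = 2^-1 * ((r * N - (G + G)) + r * N) by field.
by rewrite mulr_ge0 // invr_ge0 ler0n.
Qed.

Lemma arch_b n (X : opmat H n) : (0 < n)%N -> in_mat V X -> herm_mod ip (Jp ip V p) X ->
  (forall r : C, 0 < r -> Ctilde ip V p (add_mat (scale_mat r (diag_op p)) X)) ->
  Ctilde ip V p X.
Proof.
move=> n0 VX hX hr.
have [X' [VX' hX' eX]] := herm_rep VX hX.
apply/Ctilde_iff; split => //; exists X' => //; split => // v.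
change (0 <= qf X' v v).
have key : forall r : C, 0 < r -> 0 <= r * nrm v + qf X' v v.
  move=> r r0; have /Ctilde_iff [_ [Y [_ _ hYpos] eY]] := hr r r0.
  have : 0 <= qf Y v v := hYpos v.
  by rewrite -(qf_ceq v v eY) qf_add qf_scale qf_diag (qf_ceq v v eX).
apply/ler_addgt0Pr => e e0.
have N1 : 0 < nrm v + 1 by apply: ltr_wpDl; [exact: nrm_ge0 | exact: ltr01].
apply: le_trans (key _ (divr_gt0 e0 N1)) _.
rewrite addrC lerD2l -mulrA ler_piMr // ?ltW //.
by rewrite mulrC ltr_pdivrMr // mul1r ltrDl ltr01.
Qed.

Lemma main_sec : quotient_operator_system ip V (Jp ip V p) (Ctilde ip V p) p.
Proof.
split.
- split; [exact: J_V | exact: J0 | exact: J_comb | exact: J_adj].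
- split; [by move=> n X _; exact: Ct_herm | by move=> n X Y _; exact: Ct_sat].
- split; [by move=> n X Y _; exact: Ct_add | by move=> n r X _; exact: Ct_scale].
- split; [by move=> n m alpha X _ _; exact: Ct_conj | by move=> n X _; exact: Ct_proper].
split => //.
- exists p; first exact: p_adj.
  by apply/(modJ_iff Vp Vp).
- by move=> n X n0; exact: arch_a.
- by move=> n X n0; exact: arch_b.
Qed.

End Op.
End Basic.

Theorem theorem3p6 (R : realType) (H : lmodType R[i]) (ip : H -> H -> R[i])
    (V : (H -> H) -> Prop) (p : H -> H) :
  is_hilbert_space ip ->
  concrete_operator_system ip V ->
  V p -> is_projection ip p ->
  quotient_operator_system ip V (Jp ip V p) (Ctilde ip V p) p.
Proof.
move=> hil osV Vp prj; exact: (main_sec hil osV Vp prj).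
Qed.
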